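(* For a Cartesian left additive category $\mathbb{X}$, the category $\mathcal{D}[\mathbb{X}]$ of $\mathsf{D}$-sequences is a Cartesian differential category whose differential combinator is $\mathsf{D}[f_\bullet]_n=f_{n+1}$ (equivalently, the combinator $\mathsf{D}^\delta[f_\bullet]=\delta(f_\bullet)_1$ induced by the comultiplication $\delta$ equals $\mathsf{D}[f_\bullet]$). Furthermore, the induced tangent functor of $\mathcal{D}[\mathbb{X}]$, given on objects by $A\mapsto A\times A$ and on maps by $f_\bullet\mapsto\langle (i_\bullet\cdot\pi_0)\ast f_\bullet,\mathsf{D}[f_\bullet]\rangle$, coincides with $f_\bullet\mapsto\mathsf{T}(f_\bullet)$, where $\mathsf{T}(f_\bullet)_n=\langle\mathsf{P}^n(\pi_0)f_n,f_{n+1}\rangle$.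
   Context: Composition is in diagrammatic order. A left additive category: hom-sets commutative monoids with $f(g+h)=fg+fh$, $f0=0$; $h$ additive if $(f+g)h=fh+gh$, $0h=0$. A Cartesian left additive category: left additive with finite products and additive projections. A Cartesian differential category is a Cartesian left additive category with a combinator $\mathsf{D}$, $f:A\to B\mapsto\mathsf{D}[f]:A\times A\to B$, satisfying: [CD.1] $\mathsf{D}[f+g]=\mathsf{D}[f]+\mathsf{D}[g]$, $\mathsf{D}[0]=0$; [CD.2] $(1\times(\pi_0+\pi_1))\mathsf{D}[f]=(1\times\pi_0)\mathsf{D}[f]+(1\times\pi_1)\mathsf{D}[f]$, $\langle1,0\rangle\mathsf{D}[f]=0$; [CD.3] $\mathsf{D}[1]=\pi_1$, $\mathsf{D}[\pi_j]=\pi_1\pi_j$; [CD.4] $\mathsf{D}[\langle f,g\rangle]=\langle\mathsf{D}[f],\mathsf{D}[g]\rangle$; [CD.5] $\mathsf{D}[fg]=\langle\pi_0f,\mathsf{D}[f]\rangle\mathsf{D}[g]$; [CD.6] $\ell\mathsf{D}[\mathsf{D}[f]]=\mathsf{D}[f]$, $\ell=\langle1,0\rangle\times\langle0,1\rangle:A\times A\to(A\times A)\times(A\times A)$; [CD.7] $c\mathsf{D}[\mathsf{D}[f]]=\mathsf{D}[\mathsf{D}[f]]$, $c=\langle\langle\pi_0\pi_0,\pi_1\pi_0\rangle,\langle\pi_0\pi_1,\pi_1\pi_1\rangle\rangle$ (swap of the middle components of $(A\times A)\times(A\times A)$). Let $\mathsf{P}(A)=A\times A$, $\mathsf{P}(f)=f\times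 f$. A pre-$\mathsf{D}$-sequence $f_\bullet:A\to B$ is $(f_0,f_1,\dots)$ with $f_n:\mathsf{P}^n(A)\to B$. $(h\cdot f_\bullet)_n=\mathsf{P}^n(h)f_n$, $(f_\bullet\cdot k)_n=f_nk$. $\mathsf{T}(f_\bullet):\mathsf{P}(A)\to\mathsf{P}(B)$ with $\mathsf{T}(f_\bullet)_n=\langle\mathsf{P}^n(\pi_0)f_n,f_{n+1}\rangle$; $\mathsf{D}[f_\bullet]:\mathsf{P}(A)\to B$ with $\mathsf{D}[f_\bullet]_n=f_{n+1}$. Identity: $i_0=1$, $i_n=\pi_1\cdots\pi_1$ ($n$ times). Composition: $(f_\bullet\ast g_\bullet)_n=\mathsf{T}^n(f_\bullet)_0g_n$. Products in sequences: projections $i_\bullet\cdot\pi_j$, pairing $\langle f_\bullet,g_\bullet\rangle_n=\langle f_n,g_n\rangle$, terminal object of $\mathbb{X}$; sums and zero pointwise. A $\mathsf{D}$-sequence is a pre-$\mathsf{D}$-sequence with, for all $n$: $\langle1,0\rangle\cdot\mathsf{D}^{n+1}[f_\bullet]=0_\bullet$; $(1\times(\pi_0+\pi_1))\cdot\mathsf{D}^{n+1}[f_\bullet]=(1\times\pi_0)\cdot\mathsf{D}^{n+1}[f_\bullet]+(1\times\pi_1)\cdot\mathsf{D}^{n+1}[f_\bullet]$; $\ell\cdot\mathsf{D}^{n+2}[f_\bullet]=\mathsf{D}^{n+1}[f_\bullet]$; $c\cdot\mathsf{D}^{n+2}[f_\bullet]=\mathsf{D}^{n+2}[f_\bullet]$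 (maps $\langle1,0\rangle,1\times\pi_j,\ell,c$ taken for the object $\mathsf{P}^n(A)$). $\mathcal{D}[\mathbb{X}]$ is the category of $\mathsf{D}$-sequences with this structure. The comultiplication $\delta:\mathcal{D}[\mathbb{X}]\to\mathcal{D}[\mathcal{D}[\mathbb{X}]]$ sends $f_\bullet$ to the sequence with $0$-th term $f_\bullet$ and $n$-th term $\mathsf{D}^n[f_\bullet]$. *)

(* Defs.v *)
(* Composition is written in DIAGRAMMATIC order:
   [comp f g] means "first f, then g" (the paper's  f g ). *)

Record CLAC_data : Type := {
  Ob : Type;
  Hom : Ob -> Ob -> Type;
  idm : forall A, Hom A A;
  comp : forall A B C, Hom A B -> Hom B C -> Hom A C;
  add : forall A B, Hom A B -> Hom A B -> Hom A B;
  zero : forall A B, Hom A B;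
  prd : Ob -> Ob -> Ob;
  p0 : forall A B, Hom (prd A B) A;
  p1 : forall A B, Hom (prd A B) B;
  pair : forall A B C, Hom A B -> Hom A C -> Hom A (prd B C);
  term : Ob;
  bang : forall A, Hom A term
}.

Arguments Hom {c} _ _.
Arguments idm {c} _.
Arguments comp {c A B C} _ _.
Arguments add {c A B} _ _.
Arguments zero {c} _ _.
Arguments prd {c} _ _.
Arguments p0 {c} _ _.
Arguments p1 {c} _ _.
Arguments pair {c A B C} _ _.
Arguments term {c}.
Arguments bang {c} _.

Section Derived.
Variable C : CLAC_data.

Definition prodmap {A A' B B' : Ob C} (f : Hom A B) (g : Hom A' B')
  : Hom (prd A A') (prd B B') :=
  pair (comp (p0 A A') f) (comp (p1 A A') g).

Definition P (A : Ob C) : Ob C := prd A A.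

Definition pair10 (A : Ob C) : Hom A (P A) := pair (idm A) (zero A A).

Definition one_x_sum (A : Ob C) : Hom (prd A (P A)) (P A) :=
  prodmap (idm A) (add (p0 A A) (p1 A A)).
Definition one_x_p0 (A : Ob C) : Hom (prd A (P A)) (P A) :=
  prodmap (idm A) (p0 A A).
Definition one_x_p1 (A : Ob C) : Hom (prd A (P A)) (P A) :=
  prodmap (idm A) (p1 A A).

Definition ell (A : Ob C) : Hom (P A) (P (P A)) :=
  prodmap (pair (idm A) (zero A A)) (pair (zero A A) (idm A)).

Definition cswap (A : Ob C) : Hom (P (P A)) (P (P A)) :=
  pair (pair (comp (p0 (P A) (P A)) (p0 A A)) (comp (p1 (P A) (P A)) (p0 A A)))
       (pair (comp (p0 (P A) (P A)) (p1 A A)) (comp (p1 (P A) (P A)) (p1 A A))).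

End Derived.

Arguments prodmap {C A A' B B'} _ _.
Arguments P {C} _.
Arguments pair10 {C} _.
Arguments one_x_sum {C} _.
Arguments one_x_p0 {C} _.
Arguments one_x_p1 {C} _.
Arguments ell {C} _.
Arguments cswap {C} _.

(* Cartesian left additive category axioms, relative to a class [good] *)
(* of maps (for the base category, all maps; for D[X], the D-sequences *)
(* among all pre-D-sequences).  The clauses "closed_*" say that [good]  *)
(* maps form a subcategory containing the structure maps; all axioms   *)
(* are required for good maps.                                         *)
Record is_CLAC (C : CLAC_data) (good : forall A B : Ob C, Hom A B -> Prop)
  : Prop := {
  closed_id : forall A, good A A (idm A);
  closed_comp : forall A B D (f : Hom A B) (g : Hom B D),
      good _ _ f -> good _ _ g -> good _ _ (comp f g);
  closed_add : forall A B (f g : Hom A B),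
      good _ _ f -> good _ _ g -> good _ _ (add f g);
  closed_zero : forall A B, good A B (zero A B);
  closed_p0 : forall A B, good _ _ (p0 A B);
  closed_p1 : forall A B, good _ _ (p1 A B);
  closed_pair : forall A B D (f : Hom A B) (g : Hom A D),
      good _ _ f -> good _ _ g -> good _ _ (pair f g);
  closed_bang : forall A, good _ _ (bang A);
  comp_id_l : forall A B (f : Hom A B), good _ _ f -> comp (idm A) f = f;
  comp_id_r : forall A B (f : Hom A B), good _ _ f -> comp f (idm B) = f;
  comp_assoc : forall A B D E (f : Hom A B) (g : Hom B D) (h : Hom D E),
      good _ _ f -> good _ _ g -> good _ _ h ->
      comp (comp f g) h = comp f (comp g h);
  add_assoc : forall A B (f g h : Hom A B),
      good _ _ f -> good _ _ g -> good _ _ h ->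
      add (add f g) h = add f (add g h);
  add_comm : forall A B (f g : Hom A B),
      good _ _ f -> good _ _ g -> add f g = add g f;
  add_zero : forall A B (f : Hom A B), good _ _ f -> add f (zero A B) = f;
  comp_add_r : forall A B D (f : Hom A B) (g h : Hom B D),
      good _ _ f -> good _ _ g -> good _ _ h ->
      comp f (add g h) = add (comp f g) (comp f h);
  comp_zero_r : forall A B D (f : Hom A B),
      good _ _ f -> comp f (zero B D) = zero A D;
  pair_p0 : forall A B D (f : Hom A B) (g : Hom A D),
      good _ _ f -> good _ _ g -> comp (pair f g) (p0 B D) = f;
  pair_p1 : forall A B D (f : Hom A B) (g : Hom A D),
      good _ _ f -> good _ _ g -> comp (pair f g) (p1 B D) = g;
  pair_eta : forall A B D (h : Hom A (prd B D)),
      good _ _ h -> pair (comp h (p0 B D)) (comp h (p1 B D)) = h;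
  term_unique : forall A (f : Hom A term), good _ _ f -> f = bang A;
  p0_additive : forall A B D (f g : Hom A (prd B D)),
      good _ _ f -> good _ _ g ->
      comp (add f g) (p0 B D) = add (comp f (p0 B D)) (comp g (p0 B D));
  p0_zero : forall A B D, comp (@zero C A (prd B D)) (p0 B D) = @zero C A B;
  p1_additive : forall A B D (f g : Hom A (prd B D)),
      good _ _ f -> good _ _ g ->
      comp (add f g) (p1 B D) = add (comp f (p1 B D)) (comp g (p1 B D));
  p1_zero : forall A B D, comp (@zero C A (prd B D)) (p1 B D) = @zero C A D
}.

Record is_CDC (C : CLAC_data) (good : forall A B : Ob C, Hom A B -> Prop)
  (Dc : forall A B : Ob C, Hom A B -> Hom (P A) B) : Prop := {
  cdc_clac : is_CLAC C good;
  closed_D : forall A B (f : Hom A B), good _ _ f -> good _ _ (Dc A B f);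
  CD1_add : forall A B (f g : Hom A B), good _ _ f -> good _ _ g ->
      Dc A B (add f g) = add (Dc A B f) (Dc A B g);
  CD1_zero : forall A B, Dc A B (@zero C A B) = @zero C (P A) B;
  CD2_add : forall A B (f : Hom A B), good _ _ f ->
      comp (one_x_sum A) (Dc A B f)
      = add (comp (one_x_p0 A) (Dc A B f)) (comp (one_x_p1 A) (Dc A B f));
  CD2_zero : forall A B (f : Hom A B), good _ _ f ->
      comp (pair10 A) (Dc A B f) = zero A B;
  CD3_id : forall A, Dc A A (idm A) = p1 A A;
  CD3_p0 : forall A B, Dc _ _ (p0 A B) = comp (p1 (prd A B) (prd A B)) (p0 A B);
  CD3_p1 : forall A B, Dc _ _ (p1 A B) = comp (p1 (prd A B) (prd A B)) (p1 A B);
  CD4 : forall A B D (f : Hom A B) (g : Hom A D), good _ _ f -> good _ _ g ->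
      Dc _ _ (pair f g) = pair (Dc _ _ f) (Dc _ _ g);
  CD5 : forall A B D (f : Hom A B) (g : Hom B D), good _ _ f -> good _ _ g ->
      Dc _ _ (comp f g) = comp (pair (comp (p0 A A) f) (Dc _ _ f)) (Dc _ _ g);
  CD6 : forall A B (f : Hom A B), good _ _ f ->
      comp (ell A) (Dc _ _ (Dc _ _ f)) = Dc _ _ f;
  CD7 : forall A B (f : Hom A B), good _ _ f ->
      comp (cswap A) (Dc _ _ (Dc _ _ f)) = Dc _ _ (Dc _ _ f)
}.

Definition tangent_of (C : CLAC_data) (Dc : forall A B : Ob C, Hom A B -> Hom (P A) B)
  {A B : Ob C} (f : Hom A B) : Hom (P A) (P B) :=
  pair (comp (p0 A A) f) (Dc A B f).

Record CLAC : Type := {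
  clac_data :> CLAC_data;
  clac_axioms : is_CLAC clac_data (fun _ _ _ => True)
}.

Section Seqs.
Variable X : CLAC_data.

(* P^n(A), iterated "inside":  P^{n+1}(A) = P^n(P(A))  (= P(P^n(A))). *)
Fixpoint Pn (n : nat) (A : Ob X) : Ob X :=
  match n with 0 => A | S m => Pn m (P A) end.

Fixpoint Pout (n : nat) (A : Ob X) : Ob X :=
  match n with 0 => A | S m => P (Pout m A) end.

Fixpoint Pmap (n : nat) {A B : Ob X} (h : Hom A B) : Hom (Pn n A) (Pn n B) :=
  match n with 0 => h | S m => Pmap m (prodmap h h) end.

Definition dseq (A B : Ob X) : Type := forall n : nat, Hom (Pn n A) B.

Definition lact {A A' B : Ob X} (h : Hom A' A) (f : dseq A B) : dseq A' B :=
  fun n => comp (Pmap n h) (f n).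

Definition ract {A B B' : Ob X} (f : dseq A B) (k : Hom B B') : dseq A B' :=
  fun n => comp (f n) k.

Definition Dseq (A B : Ob X) (f : dseq A B) : dseq (P A) B :=
  fun n => f (S n).

Definition Tseq {A B : Ob X} (f : dseq A B) : dseq (P A) (P B) :=
  fun n => pair (comp (Pmap n (p0 A A)) (f n)) (f (S n)).

Fixpoint Tn (n : nat) {A B : Ob X} (f : dseq A B) : dseq (Pn n A) (Pn n B) :=
  match n with 0 => f | S m => Tn m (Tseq f) end.

Fixpoint iden_n (n : nat) (A : Ob X) : Hom (Pn n A) A :=
  match n with 0 => idm A | S m => comp (iden_n m (P A)) (p1 A A) end.
Definition iden (A : Ob X) : dseq A A := fun n => iden_n n A.

Definition dcomp {A B D : Ob X} (f : dseq A B) (g : dseq B D) : dseq A D :=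
  fun n => comp (Tn n f 0) (g n).

Fixpoint Dout (n : nat) {A B : Ob X} (f : dseq A B) : dseq (Pout n A) B :=
  match n with 0 => f | S m => Dseq _ _ (Dout m f) end.

Fixpoint Din (n : nat) {A B : Ob X} (f : dseq A B) : dseq (Pn n A) B :=
  match n with 0 => f | S m => Din m (Dseq _ _ f) end.

(* D-sequences (maps with the objects P^n(A) as in the paper) *)
Definition isDseq (A B : Ob X) (f : dseq A B) : Prop :=
  forall n : nat,
    lact (pair10 (Pout n A)) (Dout (S n) f) = (fun k => zero _ B)
 /\ lact (one_x_sum (Pout n A)) (Dout (S n) f)
    = (fun k => add (lact (one_x_p0 (Pout n A)) (Dout (S n) f) k)
                    (lact (one_x_p1 (Pout n A)) (Dout (S n) f) k))
 /\ lact (ell (Pout n A)) (Dout (S (S n)) f) = Dout (S n) f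
 /\ lact (cswap (Pout n A)) (Dout (S (S n)) f) = Dout (S (S n)) f.

Definition DX : CLAC_data := {|
  Ob := Ob X;
  Hom := dseq;
  idm := iden;
  comp := fun A B D f g => dcomp f g;
  add := fun A B f g => fun n => add (f n) (g n);
  zero := fun A B => fun n => zero _ B;
  prd := @prd X;
  p0 := fun A B => ract (iden (prd A B)) (p0 A B);
  p1 := fun A B => ract (iden (prd A B)) (p1 A B);
  pair := fun A B D f g => fun n => pair (f n) (g n);
  term := term;
  bang := fun A => fun n => bang (Pn n A)
|}.

Definition delta {A B : Ob X} (f : dseq A B) : forall n : nat, dseq (Pn n A) B :=
  fun n => Din n f.

End Seqs.

Arguments Dseq {X A B} _ _.
Arguments isDseq {X A B} _.

(* Main.v *)
Require Import Defs.
From Stdlib Require Import FunctionalExtensionality.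

Section Main.
Variable X : CLAC.
Let ax := clac_axioms X.

Local Notation lact := (lact X).
Local Notation ract := (ract X).
Local Notation Pmap := (Pmap X).
Local Notation Pn := (Pn X).
Local Notation Pout := (Pout X).
Local Notation Tseq := (Tseq X).
Local Notation Tn := (Tn X).
Local Notation iden := (iden X).
Local Notation iden_n := (iden_n X).
Local Notation dcomp := (dcomp X).
Local Notation Dout := (Dout X).
Local Notation dseq := (dseq X).

Lemma idl {A B : Ob X} (f : Hom A B) : comp (idm A) f = f.
Proof. exact (comp_id_l _ _ ax A B f I). Qed.
Lemma idr {A B : Ob X} (f : Hom A B) : comp f (idm B) = f.
Proof. exact (comp_id_r _ _ ax A B f I). Qed.
Lemma assoc {A B D E : Ob X} (f : Hom A B) (g : Hom B D) (h : Hom D E) :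
  comp (comp f g) h = comp f (comp g h).
Proof. exact (comp_assoc _ _ ax _ _ _ _ f g h I I I). Qed.
Lemma addA {A B : Ob X} (f g h : Hom A B) : add (add f g) h = add f (add g h).
Proof. exact (add_assoc _ _ ax _ _ f g h I I I). Qed.
Lemma addC {A B : Ob X} (f g : Hom A B) : add f g = add g f.
Proof. exact (add_comm _ _ ax _ _ f g I I). Qed.
Lemma add0 {A B : Ob X} (f : Hom A B) : add f (zero A B) = f.
Proof. exact (add_zero _ _ ax _ _ f I). Qed.
Lemma add0l {A B : Ob X} (f : Hom A B) : add (zero A B) f = f.
Proof. rewrite addC; apply add0. Qed.
Lemma comp_addr {A B D : Ob X} (f : Hom A B) (g h : Hom B D) :
  comp f (add g h) = add (comp f g) (comp f h).
Proof. exact (comp_add_r _ _ ax _ _ _ f g h I I I). Qed.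
Lemma comp0r {A B D : Ob X} (f : Hom A B) : comp f (zero B D) = zero A D.
Proof. exact (comp_zero_r _ _ ax _ _ _ f I). Qed.
Lemma pp0 {A B D : Ob X} (f : Hom A B) (g : Hom A D) : comp (pair f g) (p0 B D) = f.
Proof. exact (pair_p0 _ _ ax _ _ _ f g I I). Qed.
Lemma pp1 {A B D : Ob X} (f : Hom A B) (g : Hom A D) : comp (pair f g) (p1 B D) = g.
Proof. exact (pair_p1 _ _ ax _ _ _ f g I I). Qed.
Lemma peta {A B D : Ob X} (h : Hom A (prd B D)) : pair (comp h (p0 B D)) (comp h (p1 B D)) = h.
Proof. exact (pair_eta _ _ ax _ _ _ h I). Qed.
Lemma termu {A : Ob X} (f g : Hom A term) : f = g.
Proof. rewrite (term_unique _ _ ax _ f I), (term_unique _ _ ax _ g I). reflexivity. Qed.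
Lemma p0add {A B D : Ob X} (f g : Hom A (prd B D)) :
  comp (add f g) (p0 B D) = add (comp f (p0 B D)) (comp g (p0 B D)).
Proof. exact (p0_additive _ _ ax _ _ _ f g I I). Qed.
Lemma p1add {A B D : Ob X} (f g : Hom A (prd B D)) :
  comp (add f g) (p1 B D) = add (comp f (p1 B D)) (comp g (p1 B D)).
Proof. exact (p1_additive _ _ ax _ _ _ f g I I). Qed.
Lemma p0z {A B D : Ob X} : comp (zero A (prd B D)) (p0 B D) = zero A B.
Proof. exact (p0_zero _ _ ax A B D). Qed.
Lemma p1z {A B D : Ob X} : comp (zero A (prd B D)) (p1 B D) = zero A D.
Proof. exact (p1_zero _ _ ax A B D). Qed.

Lemma pair_ext {A B D : Ob X} (f g : Hom A (prd B D)) :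
  comp f (p0 B D) = comp g (p0 B D) -> comp f (p1 B D) = comp g (p1 B D) -> f = g.
Proof. intros H0 H1. rewrite <- (peta f), <- (peta g), H0, H1. reflexivity. Qed.

Lemma comp_pair {A A' B D : Ob X} (h : Hom A' A) (a : Hom A B) (b : Hom A D) :
  comp h (pair a b) = pair (comp h a) (comp h b).
Proof. apply pair_ext; rewrite assoc, ?pp0, ?pp1; reflexivity. Qed.

Lemma pair_add {A B D : Ob X} (a c : Hom A B) (b d : Hom A D) :
  add (pair a b) (pair c d) = pair (add a c) (add b d).
Proof. apply pair_ext; rewrite ?p0add, ?p1add, ?pp0, ?pp1; reflexivity. Qed.

Lemma pair_zero {A B D : Ob X} : pair (zero A B) (zero A D) = zero A (prd B D).
Proof. apply pair_ext; rewrite ?pp0, ?pp1, ?p0z, ?p1z; reflexivity. Qed.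

Lemma pair_p01 {A B : Ob X} : pair (p0 A B) (p1 A B) = idm (prd A B).
Proof. rewrite <- (peta (idm _)), !idl. reflexivity. Qed.

Lemma prodmap_p0 {A A' B B' : Ob X} (a : Hom A B) (b : Hom A' B') :
  comp (prodmap a b) (p0 B B') = comp (p0 A A') a.
Proof. unfold prodmap. apply pp0. Qed.
Lemma prodmap_p1 {A A' B B' : Ob X} (a : Hom A B) (b : Hom A' B') :
  comp (prodmap a b) (p1 B B') = comp (p1 A A') b.
Proof. unfold prodmap. apply pp1. Qed.

Lemma pair_prodmap {A B B' D D' : Ob X} (a : Hom A B) (b : Hom A B') (c : Hom B D) (d : Hom B' D') :
  comp (pair a b) (prodmap c d) = pair (comp a c) (comp b d).
Proof.
  apply pair_ext; rewrite assoc.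
  - rewrite prodmap_p0, <- assoc, pp0, pp0. reflexivity.
  - rewrite prodmap_p1, <- assoc, pp1, pp1. reflexivity.
Qed.

Lemma prodmap_comp {A A' B B' D D' : Ob X} (a : Hom A B) (b : Hom A' B') (c : Hom B D) (d : Hom B' D') :
  comp (prodmap a b) (prodmap c d) = prodmap (comp a c) (comp b d).
Proof. unfold prodmap at 1. rewrite pair_prodmap, !assoc. reflexivity. Qed.

Lemma prodmap_id {A B : Ob X} : prodmap (idm A) (idm B) = idm (prd A B).
Proof. unfold prodmap. rewrite !idr. apply pair_p01. Qed.

Lemma add_swap {A B : Ob X} (a b c d : Hom A B) :
  add (add a b) (add c d) = add (add a c) (add b d).
Proof.
  rewrite !addA. f_equal. rewrite <- !addA. f_equal. apply addC.
Qed.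

Definition additive {B D : Ob X} (h : Hom B D) :=
  (forall A, comp (zero A B) h = zero A D) /\
  (forall A (x y : Hom A B), comp (add x y) h = add (comp x h) (comp y h)).

Lemma additive_p0 {B D : Ob X} : additive (p0 B D).
Proof. split; intros; [apply p0z | apply p0add]. Qed.
Lemma additive_p1 {B D : Ob X} : additive (p1 B D).
Proof. split; intros; [apply p1z | apply p1add]. Qed.
Lemma additive_id {B : Ob X} : additive (idm B).
Proof. split; intros; rewrite !idr; reflexivity. Qed.
Lemma additive_comp {B D E : Ob X} (h : Hom B D) (k : Hom D E) :
  additive h -> additive k -> additive (comp h k).
Proof.
  intros [h0 h1] [k0 k1]; split; intros; rewrite <- !assoc.
  - rewrite h0, k0; reflexivity.
  - rewrite h1, k1; reflexivity.
Qed.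
Lemma additive_prodmap {A A' B B' : Ob X} (a : Hom A B) (b : Hom A' B') :
  additive a -> additive b -> additive (prodmap a b).
Proof.
  intros [a0 a1] [b0 b1]; split; intros; unfold prodmap; rewrite !comp_pair, <- !assoc.
  - rewrite p0z, p1z, a0, b0. apply pair_zero.
  - rewrite p0add, p1add, a1, b1, pair_add. reflexivity.
Qed.


Lemma pp0r {A B D E : Ob X} (f : Hom A B) (g : Hom A D) (h : Hom B E) :
  comp (pair f g) (comp (p0 B D) h) = comp f h.
Proof. rewrite <- assoc, pp0. reflexivity. Qed.
Lemma pp1r {A B D E : Ob X} (f : Hom A B) (g : Hom A D) (h : Hom D E) :
  comp (pair f g) (comp (p1 B D) h) = comp g h.
Proof. rewrite <- assoc, pp1. reflexivity. Qed.
Lemma prodmap_p0r {A A' B B' E : Ob X} (a : Hom A B) (b : Hom A' B') (h : Hom B E) :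
  comp (prodmap a b) (comp (p0 B B') h) = comp (p0 A A') (comp a h).
Proof. rewrite <- !assoc, prodmap_p0. reflexivity. Qed.
Lemma prodmap_p1r {A A' B B' E : Ob X} (a : Hom A B) (b : Hom A' B') (h : Hom B' E) :
  comp (prodmap a b) (comp (p1 B B') h) = comp (p1 A A') (comp b h).
Proof. rewrite <- !assoc, prodmap_p1. reflexivity. Qed.

Ltac norm := repeat progress (rewrite ?assoc, ?pp0, ?pp1, ?pp0r, ?pp1r,
   ?prodmap_p0, ?prodmap_p1, ?prodmap_p0r, ?prodmap_p1r, ?idl, ?idr, ?comp0r).

Lemma app {A B : Ob X} {F G : dseq A B} (k : nat) : F = G -> F k = G k.
Proof. intros ->; reflexivity. Qed.

Definition sadd {A B : Ob X} (F G : dseq A B) : dseq A B := fun n => add (F n) (G n).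
Definition szero (A B : Ob X) : dseq A B := fun n => zero _ B.
Definition spair {A B D : Ob X} (F : dseq A B) (G : dseq A D) : dseq A (prd B D) :=
  fun n => pair (F n) (G n).
Definition L {A B : Ob X} (h : Hom A B) : dseq A B := ract (iden A) h.

Lemma Pmap_comp k : forall (A B D : Ob X) (a : Hom A B) (b : Hom B D),
  Pmap k (comp a b) = comp (Pmap k a) (Pmap k b).
Proof.
  induction k; intros; simpl; [reflexivity|]. rewrite <- prodmap_comp. apply IHk.
Qed.
Lemma Pmap_comp_r k {A B D E : Ob X} (a : Hom A B) (b : Hom B D) (y : Hom (Pn k D) E) :
  comp (Pmap k a) (comp (Pmap k b) y) = comp (Pmap k (comp a b)) y.
Proof. rewrite Pmap_comp, assoc. reflexivity. Qed.
Lemma Pmap_id k : forall (A : Ob X), Pmap k (idm A) = idm (Pn k A).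
Proof. induction k; intros; simpl; [reflexivity|]. rewrite prodmap_id. apply IHk. Qed.

Lemma iden_nat k : forall (A A' : Ob X) (h : Hom A A'),
  comp (Pmap k h) (iden_n k A') = comp (iden_n k A) h.
Proof.
  induction k; intros; simpl.
  - rewrite idl, idr. reflexivity.
  - rewrite <- assoc, IHk, !assoc. unfold P. rewrite prodmap_p1. reflexivity.
Qed.

Lemma lact_lact {A A' A'' B : Ob X} (a : Hom A'' A') (b : Hom A' A) (F : dseq A B) :
  lact a (lact b F) = lact (comp a b) F.
Proof. apply functional_extensionality_dep; intro n. unfold Defs.lact. rewrite Pmap_comp, assoc. reflexivity. Qed.
Lemma lact_sadd {A A' B : Ob X} (h : Hom A' A) (F G : dseq A B) :
  lact h (sadd F G) = sadd (lact h F) (lact h G).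
Proof. apply functional_extensionality_dep; intro n. unfold Defs.lact, sadd. apply comp_addr. Qed.
Lemma lact_szero {A A' B : Ob X} (h : Hom A' A) : lact h (szero A B) = szero A' B.
Proof. apply functional_extensionality_dep; intro n. unfold Defs.lact, szero. apply comp0r. Qed.
Lemma lact_spair {A A' B D : Ob X} (h : Hom A' A) (F : dseq A B) (G : dseq A D) :
  lact h (spair F G) = spair (lact h F) (lact h G).
Proof. apply functional_extensionality_dep; intro n. unfold Defs.lact, spair. apply comp_pair. Qed.
Lemma lact_ract {A A' B B' : Ob X} (h : Hom A' A) (F : dseq A B) (k : Hom B B') :
  lact h (ract F k) = ract (lact h F) k.
Proof. apply functional_extensionality_dep; intro n. unfold Defs.lact, Defs.ract. symmetry; apply assoc. Qed.
Lemma ract_ract {A B B' B'' : Ob X} (F : dseq A B) (a : Hom B B') (b : Hom B' B'') :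
  ract (ract F a) b = ract F (comp a b).
Proof. apply functional_extensionality_dep; intro n. unfold Defs.ract. apply assoc. Qed.
Lemma ract_sadd {A B B' : Ob X} (F G : dseq A B) (r : Hom B B') : additive r ->
  ract (sadd F G) r = sadd (ract F r) (ract G r).
Proof. intros [_ H]. apply functional_extensionality_dep; intro n. unfold Defs.ract, sadd. apply H. Qed.
Lemma ract_szero {A B B' : Ob X} (r : Hom B B') : additive r ->
  ract (szero A B) r = szero A B'.
Proof. intros [H _]. apply functional_extensionality_dep; intro n. unfold Defs.ract, szero. apply H. Qed.
Lemma lact_iden {A A' : Ob X} (h : Hom A' A) : lact h (iden A) = L h.
Proof. apply functional_extensionality_dep; intro n. unfold Defs.lact, L, Defs.ract, Defs.iden. apply iden_nat. Qed.
Lemma lact_L {A A' B : Ob X} (h : Hom A' A) (k : Hom A B) : lact h (L k) = L (comp h k).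
Proof. unfold L. rewrite lact_ract, lact_iden. unfold L. apply ract_ract. Qed.
Lemma ract_L {A B B' : Ob X} (a : Hom A B) (b : Hom B B') : ract (L a) b = L (comp a b).
Proof. unfold L. apply ract_ract. Qed.
Lemma L_id {A : Ob X} : L (idm A) = iden A.
Proof. apply functional_extensionality_dep; intro n. unfold L, Defs.ract. apply idr. Qed.
Lemma L_add {A B : Ob X} (a b : Hom A B) : sadd (L a) (L b) = L (add a b).
Proof. apply functional_extensionality_dep; intro n. unfold L, Defs.ract, sadd. symmetry; apply comp_addr. Qed.
Lemma L_pair {A B D : Ob X} (a : Hom A B) (b : Hom A D) : spair (L a) (L b) = L (pair a b).
Proof. apply functional_extensionality_dep; intro n. unfold L, Defs.ract, spair. symmetry; apply comp_pair. Qed.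
Lemma L_zero {A B : Ob X} : L (zero A B) = szero A B.
Proof. apply functional_extensionality_dep; intro n. unfold L, Defs.ract, szero. apply comp0r. Qed.

Lemma Tseq_ract {A B B' : Ob X} (F : dseq A B) (k : Hom B B') :
  Tseq (ract F k) = ract (Tseq F) (prodmap k k).
Proof.
  apply functional_extensionality_dep; intro n. unfold Defs.Tseq, Defs.ract.
  unfold P. rewrite pair_prodmap, assoc. reflexivity.
Qed.
Lemma Tn_ract m : forall (A B B' : Ob X) (F : dseq A B) (k : Hom B B'),
  Tn m (ract F k) = ract (Tn m F) (Pmap m k).
Proof. induction m; intros; simpl; [reflexivity|]. rewrite Tseq_ract. apply IHm. Qed.
Lemma Tseq_lact {A A' B : Ob X} (h : Hom A' A) (F : dseq A B) :
  Tseq (lact h F) = lact (prodmap h h) (Tseq F).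
Proof.
  apply functional_extensionality_dep; intro n. unfold Defs.Tseq, Defs.lact.
  unfold P. rewrite comp_pair. f_equal. rewrite !Pmap_comp_r, prodmap_p0. reflexivity.
Qed.
Lemma Tn_lact m : forall (A A' B : Ob X) (h : Hom A' A) (F : dseq A B),
  Tn m (lact h F) = lact (Pmap m h) (Tn m F).
Proof. induction m; intros; simpl; [reflexivity|]. rewrite Tseq_lact. apply IHm. Qed.
Lemma Tseq_iden (A : Ob X) : Tseq (iden A) = iden (P A).
Proof.
  apply functional_extensionality_dep; intro n. unfold Defs.Tseq, Defs.iden. simpl.
  rewrite iden_nat. apply peta.
Qed.
Lemma Tn_iden m : forall (A : Ob X), Tn m (iden A) = iden (Pn m A).
Proof. induction m; intros; simpl; [reflexivity|]. rewrite Tseq_iden. apply IHm. Qed.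
Lemma Tn_iden0 m (A : Ob X) : Tn m (iden A) 0 = idm (Pn m A).
Proof. rewrite Tn_iden. reflexivity. Qed.
Lemma Tn_iden_n m : forall (A B : Ob X) (F : dseq A B), comp (Tn m F 0) (iden_n m B) = F m.
Proof.
  induction m; intros; simpl.
  - apply idr.
  - rewrite <- assoc. transitivity (comp (Tseq F m) (p1 B B)). { f_equal. apply IHm. } unfold Defs.Tseq. apply pp1.
Qed.
Lemma Tn_p0 n {A B : Ob X} (F : dseq A B) :
  comp (Tn n (Tseq F) 0) (Pmap n (p0 B B)) = comp (Pmap n (p0 A A)) (Tn n F 0).
Proof.
  transitivity (Tn n (ract (Tseq F) (p0 B B)) 0).
  { rewrite Tn_ract. reflexivity. }
  assert (E : ract (Tseq F) (p0 B B) = lact (p0 A A) F).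
  { apply functional_extensionality_dep; intro k. unfold Defs.ract, Defs.Tseq, Defs.lact. apply pp0. }
  rewrite E, Tn_lact. reflexivity.
Qed.
Lemma Tseq_dcomp {A B D : Ob X} (F : dseq A B) (G : dseq B D) :
  Tseq (dcomp F G) = dcomp (Tseq F) (Tseq G).
Proof.
  apply functional_extensionality_dep; intro n. unfold Defs.Tseq at 1 3. unfold Defs.dcomp.
  unfold P. rewrite comp_pair. f_equal. rewrite <- !assoc. f_equal. symmetry. apply Tn_p0.
Qed.
Lemma Tn_dcomp m : forall (A B D : Ob X) (F : dseq A B) (G : dseq B D),
  Tn m (dcomp F G) = dcomp (Tn m F) (Tn m G).
Proof. induction m; intros; simpl; [reflexivity|]. rewrite Tseq_dcomp. apply IHm. Qed.
Lemma dcomp_assoc {A B D E : Ob X} (F : dseq A B) (G : dseq B D) (H : dseq D E) :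
  dcomp (dcomp F G) H = dcomp F (dcomp G H).
Proof.
  apply functional_extensionality_dep; intro n.
  change (comp (Tn n (dcomp F G) 0) (H n) = comp (Tn n F 0) (comp (Tn n G 0) (H n))).
  rewrite Tn_dcomp. unfold Defs.dcomp at 1. simpl. apply assoc.
Qed.
Lemma dcomp_idl {A B : Ob X} (F : dseq A B) : dcomp (iden A) F = F.
Proof.
  apply functional_extensionality_dep; intro n.
  change (comp (Tn n (iden A) 0) (F n) = F n). rewrite Tn_iden0. apply idl.
Qed.
Lemma dcomp_idr {A B : Ob X} (F : dseq A B) : dcomp F (iden B) = F.
Proof.
  apply functional_extensionality_dep; intro n.
  change (comp (Tn n F 0) (iden_n n B) = F n). apply Tn_iden_n.
Qed.
Lemma lact_dcomp {A A' B D : Ob X} (h : Hom A' A) (F : dseq A B) (G : dseq B D) :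
  lact h (dcomp F G) = dcomp (lact h F) G.
Proof.
  apply functional_extensionality_dep; intro n.
  change (comp (Pmap n h) (comp (Tn n F 0) (G n)) = comp (Tn n (lact h F) 0) (G n)).
  rewrite Tn_lact. unfold Defs.lact. simpl. symmetry; apply assoc.
Qed.
Lemma ract_dcomp {A B B' D : Ob X} (F : dseq A B) (k : Hom B B') (G : dseq B' D) :
  dcomp (ract F k) G = dcomp F (lact k G).
Proof.
  apply functional_extensionality_dep; intro n.
  change (comp (Tn n (ract F k) 0) (G n) = comp (Tn n F 0) (comp (Pmap n k) (G n))).
  rewrite Tn_ract. unfold Defs.ract. apply assoc.
Qed.
Lemma L_dcomp {A B D : Ob X} (h : Hom A B) (G : dseq B D) : dcomp (L h) G = lact h G.
Proof. unfold L. rewrite ract_dcomp. apply dcomp_idl. Qed.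
Lemma dcomp_L {A B D : Ob X} (F : dseq A B) (k : Hom B D) : dcomp F (L k) = ract F k.
Proof.
  apply functional_extensionality_dep; intro n.
  change (comp (Tn n F 0) (comp (iden_n n B) k) = comp (F n) k).
  rewrite <- assoc, Tn_iden_n. reflexivity.
Qed.
Lemma dcomp_sadd {A B D : Ob X} (F : dseq A B) (G H : dseq B D) :
  dcomp F (sadd G H) = sadd (dcomp F G) (dcomp F H).
Proof. apply functional_extensionality_dep; intro n. apply comp_addr. Qed.
Lemma dcomp_szero {A B D : Ob X} (F : dseq A B) : dcomp F (szero B D) = szero A D.
Proof. apply functional_extensionality_dep; intro n. apply comp0r. Qed.

Fixpoint Poutmap (n : nat) {A B : Ob X} (h : Hom A B) : Hom (Pout n A) (Pout n B) :=
  match n with 0 => h | S m => prodmap (Poutmap m h) (Poutmap m h) end.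
Fixpoint Tout (n : nat) {A B : Ob X} (f : dseq A B) : dseq (Pout n A) (Pout n B) :=
  match n with 0 => f | S m => Tseq (Tout m f) end.
Fixpoint ioutn (n : nat) (A : Ob X) : Hom (Pout n A) A :=
  match n with 0 => idm A | S m => comp (p1 (Pout m A) (Pout m A)) (ioutn m A) end.

Lemma additive_Poutmap n : forall {A B : Ob X} (h : Hom A B), additive h -> additive (Poutmap n h).
Proof. induction n; intros; simpl; auto. apply additive_prodmap; auto. Qed.
Lemma additive_ioutn n (A : Ob X) : additive (ioutn n A).
Proof. induction n; simpl. apply additive_id. apply additive_comp; auto. apply additive_p1. Qed.

Lemma Dout_sadd n : forall {A B : Ob X} (F G : dseq A B), Dout n (sadd F G) = sadd (Dout n F) (Dout n G).
Proof. induction n; intros; simpl; [reflexivity|]. rewrite IHn. reflexivity. Qed.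
Lemma Dout_szero n : forall (A B : Ob X), Dout n (szero A B) = szero _ B.
Proof. induction n; intros; simpl; [reflexivity|]. rewrite IHn. reflexivity. Qed.
Lemma Dout_spair n : forall {A B D : Ob X} (F : dseq A B) (G : dseq A D),
  Dout n (spair F G) = spair (Dout n F) (Dout n G).
Proof. induction n; intros; simpl; [reflexivity|]. rewrite IHn. reflexivity. Qed.
Lemma Dout_lact n : forall {A A' B : Ob X} (h : Hom A' A) (F : dseq A B),
  Dout n (lact h F) = lact (Poutmap n h) (Dout n F).
Proof. induction n; intros; simpl; [reflexivity|]. rewrite IHn. reflexivity. Qed.
Lemma Dout_ract n : forall {A B B' : Ob X} (F : dseq A B) (k : Hom B B'),
  Dout n (ract F k) = ract (Dout n F) k.
Proof. induction n; intros; simpl; [reflexivity|]. rewrite IHn. reflexivity. Qed.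
Lemma Dout_dcomp n : forall {A B D : Ob X} (F : dseq A B) (G : dseq B D),
  Dout n (dcomp F G) = dcomp (Tout n F) (Dout n G).
Proof. induction n; intros; simpl; [reflexivity|]. rewrite IHn. reflexivity. Qed.
Lemma Dout_iden n : forall (A : Ob X), Dout n (iden A) = L (ioutn n A).
Proof.
  induction n; intros; simpl.
  - symmetry. apply L_id.
  - rewrite IHn. unfold L. change (ract (ract (iden (P (Pout n A))) (p1 (Pout n A) (Pout n A))) (ioutn n A)
      = ract (iden (Pout (S n) A)) (comp (p1 (Pout n A) (Pout n A)) (ioutn n A))).
    apply ract_ract.
Qed.

Definition sim {A1 A2 B : Ob X} (F : dseq A1 B) (G : dseq A2 B) : Prop :=
  exists e : A1 = A2, eq_rect A1 (fun Y => dseq Y B) F A2 e = G.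
Lemma sim_Dseq {A1 A2 B : Ob X} (F : dseq A1 B) (G : dseq A2 B) : sim F G -> sim (Dseq F) (Dseq G).
Proof. intros [e He]. subst G. destruct e. exists eq_refl. reflexivity. Qed.
Lemma Dout_Dseq_sim n : forall {A B : Ob X} (f : dseq A B), sim (Dseq (Dout n f)) (Dout n (Dseq f)).
Proof.
  induction n; intros.
  - exists eq_refl. reflexivity.
  - simpl. apply sim_Dseq. apply IHn.
Qed.

Definition L0 {A B : Ob X} (F : dseq A B) : Prop :=
    lact (pair10 A) (Dseq F) = szero _ B
 /\ lact (one_x_sum A) (Dseq F) = sadd (lact (one_x_p0 A) (Dseq F)) (lact (one_x_p1 A) (Dseq F))
 /\ lact (ell A) (Dseq (Dseq F)) = Dseq F
 /\ lact (cswap A) (Dseq (Dseq F)) = Dseq (Dseq F).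

Lemma sim_L0 {A1 A2 B : Ob X} (F : dseq A1 B) (G : dseq A2 B) : sim F G -> L0 F -> L0 G.
Proof. intros [e He]. subst G. destruct e. simpl. auto. Qed.

Lemma isDseq_L0 {A B : Ob X} (f : dseq A B) : isDseq f <-> forall n, L0 (Dout n f).
Proof. split; intros H n; exact (H n). Qed.

Lemma closed_Dseq {A B : Ob X} (f : dseq A B) : isDseq f -> isDseq (Dseq f).
Proof.
  intros H. apply (proj2 (isDseq_L0 _)). intro n. apply (sim_L0 _ _ (Dout_Dseq_sim n f)).
  exact (proj1 (isDseq_L0 f) H (S n)).
Qed.

Lemma Dseq_sadd {A B : Ob X} (F G : dseq A B) : Dseq (sadd F G) = sadd (Dseq F) (Dseq G).
Proof. reflexivity. Qed.
Lemma Dseq_szero {A B : Ob X} : Dseq (szero A B) = szero (P A) B.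
Proof. reflexivity. Qed.
Lemma Dseq_spair {A B D : Ob X} (F : dseq A B) (G : dseq A D) : Dseq (spair F G) = spair (Dseq F) (Dseq G).
Proof. reflexivity. Qed.
Lemma Dseq_ract {A B B' : Ob X} (F : dseq A B) (k : Hom B B') : Dseq (ract F k) = ract (Dseq F) k.
Proof. reflexivity. Qed.
Lemma Dseq_lact {A A' B : Ob X} (h : Hom A' A) (F : dseq A B) :
  Dseq (lact h F) = lact (prodmap h h) (Dseq F).
Proof. reflexivity. Qed.
Lemma Dseq_dcomp {A B D : Ob X} (F : dseq A B) (G : dseq B D) :
  Dseq (dcomp F G) = dcomp (Tseq F) (Dseq G).
Proof. reflexivity. Qed.
Lemma Dseq_iden (A : Ob X) : Dseq (iden A) = L (p1 A A).
Proof. reflexivity. Qed.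

Lemma L0_sadd {A B : Ob X} (F G : dseq A B) : L0 F -> L0 G -> L0 (sadd F G).
Proof.
  intros (Fa & Fb & Fc & Fd) (Ga & Gb & Gc & Gd). unfold L0. rewrite !Dseq_sadd, !lact_sadd.
  rewrite Fa, Ga, Fb, Gb, Fc, Gc, Fd, Gd. repeat split.
  - apply functional_extensionality_dep; intro n. apply add0.
  - apply functional_extensionality_dep; intro n. apply add_swap.
Qed.
Lemma L0_szero (A B : Ob X) : L0 (szero A B).
Proof.
  unfold L0. rewrite !Dseq_szero, !lact_szero. repeat split.
  apply functional_extensionality_dep; intro n. symmetry. apply add0.
Qed.
Lemma L0_spair {A B D : Ob X} (F : dseq A B) (G : dseq A D) : L0 F -> L0 G -> L0 (spair F G).
Proof.
  intros (Fa & Fb & Fc & Fd) (Ga & Gb & Gc & Gd). unfold L0. rewrite !Dseq_spair, !lact_spair.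
  rewrite Fa, Ga, Fb, Gb, Fc, Gc, Fd, Gd. repeat split.
  - apply functional_extensionality_dep; intro n. apply pair_zero.
  - apply functional_extensionality_dep; intro n. symmetry. apply pair_add.
Qed.
Lemma L0_ract {A B B' : Ob X} (F : dseq A B) (r : Hom B B') : additive r -> L0 F -> L0 (ract F r).
Proof.
  intros Hr (Fa & Fb & Fc & Fd). unfold L0. rewrite !Dseq_ract, !lact_ract.
  rewrite Fa, Fb, Fc, Fd. repeat split.
  - apply ract_szero; auto.
  - apply ract_sadd; auto.
Qed.
Lemma seq_term {A : Ob X} (F G : dseq A term) : F = G.
Proof. apply functional_extensionality_dep; intro n. apply termu. Qed.
Lemma L0_term {A : Ob X} (F : dseq A term) : L0 F.
Proof. repeat split; apply seq_term. Qed.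
Lemma L0_iden (A : Ob X) : L0 (iden A).
Proof.
  assert (E : Dseq (Dseq (iden A)) = L (comp (p1 (P A) (P A)) (p1 A A))).
  { unfold L. rewrite <- ract_ract. reflexivity. }
  unfold L0. rewrite E, !Dseq_iden, !lact_L. repeat split.
  - unfold pair10, P. rewrite pp1. apply L_zero.
  - rewrite L_add. f_equal. unfold one_x_sum, one_x_p0, one_x_p1. unfold P.
    rewrite !prodmap_p1. apply comp_addr.
  - f_equal. unfold ell, P. rewrite <- assoc, prodmap_p1, assoc, pp1, idr. reflexivity.
  - f_equal. unfold cswap, P. rewrite <- assoc, pp1, pp1. reflexivity.
Qed.

Ltac rwP lem := let E := fresh in pose proof lem as E; unfold P in E; rewrite E; clear E.
Ltac rwPl lem := let E := fresh in pose proof lem as E; unfold P in E; rewrite <- E; clear E.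

Section Nat.
Context {A' A : Ob X} (H : Hom A' A) (HH : additive H).

Lemma pair10_nat : comp (pair10 A') (prodmap H H) = comp H (pair10 A).
Proof.
  destruct HH as [H0 _]. unfold pair10, P. rewrite pair_prodmap, comp_pair, idl, idr, H0, comp0r.
  reflexivity.
Qed.
Lemma pair01_nat : comp (pair (zero A' A') (idm A')) (prodmap H H) = comp H (pair (zero A A) (idm A)).
Proof.
  destruct HH as [H0 _]. unfold P. rewrite pair_prodmap, comp_pair, idl, idr, H0, comp0r.
  reflexivity.
Qed.
Lemma sum_nat : comp (one_x_sum A') (prodmap H H) = comp (prodmap H (prodmap H H)) (one_x_sum A).
Proof.
  destruct HH as [_ H1]. unfold one_x_sum, P. rewrite !prodmap_comp, idl, idr, H1, comp_addr.
  rewrite prodmap_p0, prodmap_p1. reflexivity.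
Qed.
Lemma p0_nat : comp (one_x_p0 A') (prodmap H H) = comp (prodmap H (prodmap H H)) (one_x_p0 A).
Proof. unfold one_x_p0, P. rewrite !prodmap_comp, idl, idr, prodmap_p0. reflexivity. Qed.
Lemma p1_nat : comp (one_x_p1 A') (prodmap H H) = comp (prodmap H (prodmap H H)) (one_x_p1 A).
Proof. unfold one_x_p1, P. rewrite !prodmap_comp, idl, idr, prodmap_p1. reflexivity. Qed.
Lemma ell_nat : comp (ell A') (prodmap (prodmap H H) (prodmap H H)) = comp (prodmap H H) (ell A).
Proof.
  unfold ell. unfold P. rewrite !prodmap_comp. f_equal.
  - apply pair10_nat.
  - apply pair01_nat.
Qed.
End Nat.

Lemma cswap_nat {A' A : Ob X} (H : Hom A' A) :
  comp (cswap A') (prodmap (prodmap H H) (prodmap H H))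
  = comp (prodmap (prodmap H H) (prodmap H H)) (cswap A).
Proof.
  unfold cswap, P. rewrite !comp_pair, !pair_prodmap. norm. reflexivity.
Qed.

Lemma L0_lact {A A' B : Ob X} (H : Hom A' A) (F : dseq A B) : additive H -> L0 F -> L0 (lact H F).
Proof.
  intros HH (Fa & Fb & Fc & Fd). unfold L0. rewrite !Dseq_lact, !lact_lact. unfold P in *. repeat split.
  - rwP (pair10_nat H HH). rewrite <- lact_lact, Fa. apply lact_szero.
  - rwP (sum_nat H HH). rwP (p0_nat H). rwP (p1_nat H). rewrite <- !lact_lact, Fb. apply lact_sadd.
  - rwP (ell_nat H HH). rewrite <- lact_lact, Fc. reflexivity.
  - rwP (cswap_nat H). rewrite <- lact_lact, Fd. reflexivity.
Qed.

Lemma T_pair10 {A B : Ob X} (F : dseq A B) : L0 F ->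
  lact (pair10 A) (Tseq F) = ract F (pair10 B).
Proof.
  intros (Fa & _ & _ & _). apply functional_extensionality_dep; intro k.
  pose proof (app k Fa) as Ha. unfold Defs.lact, Defs.Dseq, szero in Ha.
  unfold Defs.lact, Defs.Tseq, Defs.ract. unfold P in *.
  rewrite comp_pair, Pmap_comp_r, Ha. unfold pair10. rewrite pp0, Pmap_id, idl, comp_pair, idr, comp0r.
  reflexivity.
Qed.

Definition k0 (B : Ob X) : Hom (P (P B)) (P B) :=
  pair (comp (p0 (P B) (P B)) (p0 B B)) (add (comp (p0 (P B) (P B)) (p1 B B)) (comp (p1 (P B) (P B)) (p1 B B))).
Definition qq (B : Ob X) : Hom (P (P B)) (P B) :=
  pair (comp (p0 (P B) (P B)) (p0 B B)) (comp (p1 (P B) (P B)) (p1 B B)).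
Definition rr (B : Ob X) : Hom (P (P B)) (prd B (P B)) :=
  pair (comp (p0 (P B) (P B)) (p0 B B)) (pair (comp (p0 (P B) (P B)) (p1 B B)) (comp (p1 (P B) (P B)) (p1 B B))).

Lemma T_sum {A B : Ob X} (F : dseq A B) : L0 F ->
  lact (one_x_sum A) (Tseq F) = ract (spair (lact (one_x_p0 A) (Tseq F)) (lact (one_x_p1 A) (Tseq F))) (k0 B).
Proof.
  intros (_ & Fb & _ & _). apply functional_extensionality_dep; intro k.
  pose proof (app k Fb) as Hb. unfold Defs.lact, Defs.Dseq, sadd in Hb.
  unfold Defs.lact, Defs.Tseq, Defs.ract, spair, k0. unfold P in *.
  rewrite !comp_pair, comp_addr. norm. rewrite Hb, !Pmap_comp_r.
  unfold one_x_sum, one_x_p0. rewrite !prodmap_p0. reflexivity.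
Qed.

Lemma k0_eq (B : Ob X) : k0 B = comp (rr B) (one_x_sum B).
Proof.
  unfold k0, rr, one_x_sum, prodmap, P. rewrite comp_pair. norm. rewrite comp_addr. norm. reflexivity.
Qed.
Lemma rr_p0 (B : Ob X) : comp (rr B) (one_x_p0 B) = p0 (P B) (P B).
Proof.
  unfold rr, one_x_p0, prodmap, P. rewrite comp_pair. norm. apply pair_ext; norm; reflexivity.
Qed.
Lemma rr_p1 (B : Ob X) : comp (rr B) (one_x_p1 B) = qq B.
Proof.
  unfold rr, one_x_p1, prodmap, qq, P. rewrite comp_pair. norm. reflexivity.
Qed.

Lemma lact_k0 {B C : Ob X} (G : dseq B C) : L0 G ->
  lact (k0 B) (Dseq G) = sadd (lact (p0 (P B) (P B)) (Dseq G)) (lact (qq B) (Dseq G)).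
Proof.
  intros (_ & Gb & _ & _). rewrite k0_eq, <- lact_lact, Gb, lact_sadd, !lact_lact, rr_p0, rr_p1.
  reflexivity.
Qed.

Lemma Phi_p0 {A B : Ob X} (F : dseq A B) :
  ract (spair (lact (one_x_p0 A) (Tseq F)) (lact (one_x_p1 A) (Tseq F))) (p0 (P B) (P B))
  = lact (one_x_p0 A) (Tseq F).
Proof. apply functional_extensionality_dep; intro k. unfold Defs.ract, spair. apply pp0. Qed.
Lemma Phi_q {A B : Ob X} (F : dseq A B) :
  ract (spair (lact (one_x_p0 A) (Tseq F)) (lact (one_x_p1 A) (Tseq F))) (qq B)
  = lact (one_x_p1 A) (Tseq F).
Proof.
  apply functional_extensionality_dep; intro k. unfold Defs.ract, spair, Defs.lact, Defs.Tseq, qq, P.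
  apply pair_ext; norm; rewrite ?Pmap_comp_r; unfold one_x_p0, one_x_p1; rewrite ?prodmap_p0; reflexivity.
Qed.

Ltac spp := repeat match goal with
 | |- context [comp (pair ?a ?b) (p0 ?B ?D)] => rewrite (pp0 (B:=B) (D:=D) a b)
 | |- context [comp (pair ?a ?b) (p1 ?B ?D)] => rewrite (pp1 (B:=B) (D:=D) a b)
 | |- context [comp (pair ?a ?b) (comp (p0 ?B ?D) ?h)] => rewrite (pp0r (B:=B) (D:=D) a b h)
 | |- context [comp (pair ?a ?b) (comp (p1 ?B ?D) ?h)] => rewrite (pp1r (B:=B) (D:=D) a b h)
 end.

Lemma T_ell {A B : Ob X} (F : dseq A B) : L0 F ->
  lact (ell A) (Tseq (Tseq F)) = ract (Tseq F) (ell B).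
Proof.
  intros HF. pose proof (T_pair10 F HF) as HT. destruct HF as (Fa & _ & Fc & _).
  apply functional_extensionality_dep; intro k.
  pose proof (app k Fa) as Ha. unfold Defs.lact, Defs.Dseq, szero in Ha.
  pose proof (app k Fc) as Hc. unfold Defs.lact, Defs.Dseq in Hc.
  pose proof (app k HT) as Ht. unfold Defs.lact, Defs.ract in Ht.
  unfold Defs.lact, Defs.ract.
  change (Tseq (Tseq F) k) with (pair (comp (Pmap k (p0 (P A) (P A))) (Tseq F k)) (Tseq F (S k))).
  cbn [Defs.Pn Defs.Pmap] in *; unfold P in *.
  apply pair_ext.
  - rewrite !assoc. spp. rewrite Pmap_comp_r.
    assert (E1 : comp (ell A) (p0 (P A) (P A)) = comp (p0 A A) (pair10 A)).
    { unfold ell, pair10. apply prodmap_p0. }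
    assert (E2 : comp (ell B) (p0 (P B) (P B)) = comp (p0 B B) (pair10 B)).
    { unfold ell, pair10. apply prodmap_p0. }
    rwP E1. rwP E2. rewrite Pmap_comp, assoc.
    transitivity (comp (Pmap k (p0 A A)) (comp (F k) (pair10 B))). { f_equal. exact Ht. }
    rewrite <- !assoc. f_equal. unfold Defs.Tseq. spp. reflexivity.
  - rewrite !assoc. spp. unfold Defs.Tseq at 1. rewrite comp_pair.
    assert (E3 : comp (ell A) (prodmap (p0 A A) (p0 A A)) = comp (p0 A A) (pair10 A)).
    { unfold ell, pair10, P. rewrite prodmap_comp. spp. unfold prodmap. rewrite comp_pair, !idr, !comp0r.
      reflexivity. }
    assert (E4 : comp (ell B) (p1 (P B) (P B)) = comp (p1 B B) (pair (zero B B) (idm B))).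
    { unfold ell. apply prodmap_p1. }
    transitivity (pair (zero (Pn k (prd A A)) B) (F (S k))).
    { f_equal.
      - change (Pmap (S k) (p0 A A)) with (Pmap k (prodmap (p0 A A) (p0 A A))). cbn [Defs.Pn]; unfold P. rewrite Pmap_comp_r.
        rwP E3. rewrite Pmap_comp, assoc.
        transitivity (comp (Pmap k (p0 A A)) (zero (Pn k A) B)). { f_equal. exact Ha. }
        apply comp0r.
      - exact Hc. }
    rwP E4. unfold Defs.Tseq. rewrite <- assoc. spp. rewrite comp_pair, comp0r, idr. reflexivity.
Qed.

Ltac sassoc := repeat match goal with |- context [comp (comp ?f ?g) ?h] =>
  first [rewrite (assoc f g h) | rewrite (assoc f g) | rewrite (assoc f)] end.
Ltac sPmap := repeat match goal with |- context [comp (Pmap ?k ?a) (comp (Pmap ?k ?b) ?y)] =>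
  first [rewrite (Pmap_comp_r k a b y) | rewrite (Pmap_comp_r k a b)] end.

Lemma T_c {A B : Ob X} (F : dseq A B) : L0 F ->
  lact (cswap A) (Tseq (Tseq F)) = ract (Tseq (Tseq F)) (cswap B).
Proof.
  intros (_ & _ & _ & Fd). apply functional_extensionality_dep; intro k.
  pose proof (app k Fd) as Hd. unfold Defs.lact, Defs.Dseq in Hd.
  unfold Defs.lact, Defs.ract, Defs.Tseq.
  cbn [Defs.Pn Defs.Pmap] in *; unfold P in *.
  apply pair_ext; apply pair_ext; cbn [Defs.Pn]; unfold P; sassoc; spp; sPmap.
  4: { transitivity (F (S (S k))). { exact Hd. } unfold cswap, P. sassoc; spp. reflexivity. }
  all: unfold cswap, P; sassoc; spp; unfold prodmap; sassoc; spp.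
  - etransitivity; [apply Pmap_comp_r|]. etransitivity; [apply Pmap_comp_r|].
    etransitivity; [|symmetry; apply Pmap_comp_r]. f_equal. f_equal. sassoc; spp. reflexivity.
  - etransitivity; [apply Pmap_comp_r|]. f_equal. f_equal. sassoc; spp. reflexivity.
  - etransitivity; [apply Pmap_comp_r|]. f_equal. f_equal. apply pair_ext; sassoc; spp; reflexivity.
Qed.

Lemma L0_dcomp {A B C : Ob X} (F : dseq A B) (G : dseq B C) : L0 F -> L0 G -> L0 (dcomp F G).
Proof.
  intros HF HG. pose proof HG as (Ga & Gb & Gc & Gd).
  unfold L0. rewrite !Dseq_dcomp. repeat split.
  - rewrite lact_dcomp, (T_pair10 F HF), ract_dcomp, Ga. apply dcomp_szero.
  - rewrite !lact_dcomp, (T_sum F HF), ract_dcomp. unfold P. rwP (lact_k0 G HG).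
    rewrite dcomp_sadd, <- !ract_dcomp. rwP (Phi_p0 F). rwP (Phi_q F). reflexivity.
  - rewrite lact_dcomp, (T_ell F HF), ract_dcomp, Gc. reflexivity.
  - rewrite lact_dcomp, (T_c F HF), ract_dcomp, Gd. reflexivity.
Qed.

Lemma closed_lact {A A' B : Ob X} (H : Hom A' A) (F : dseq A B) : additive H -> isDseq F -> isDseq (lact H F).
Proof.
  intros HH HF. apply (proj2 (isDseq_L0 _)). intro n. rewrite Dout_lact.
  apply L0_lact; [apply additive_Poutmap; exact HH | exact (HF n)].
Qed.
Lemma closed_ract {A B B' : Ob X} (F : dseq A B) (r : Hom B B') : additive r -> isDseq F -> isDseq (ract F r).
Proof.
  intros Hr HF. apply (proj2 (isDseq_L0 _)). intro n. rewrite Dout_ract.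
  apply L0_ract; [exact Hr | exact (HF n)].
Qed.
Lemma closed_sadd {A B : Ob X} (F G : dseq A B) : isDseq F -> isDseq G -> isDseq (sadd F G).
Proof.
  intros HF HG. apply (proj2 (isDseq_L0 _)). intro n. rewrite Dout_sadd.
  apply L0_sadd; [exact (HF n) | exact (HG n)].
Qed.
Lemma closed_szero (A B : Ob X) : isDseq (szero A B).
Proof. apply (proj2 (isDseq_L0 _)). intro n. rewrite Dout_szero. apply L0_szero. Qed.
Lemma closed_spair {A B D : Ob X} (F : dseq A B) (G : dseq A D) : isDseq F -> isDseq G -> isDseq (spair F G).
Proof.
  intros HF HG. apply (proj2 (isDseq_L0 _)). intro n. rewrite Dout_spair.
  apply L0_spair; [exact (HF n) | exact (HG n)].
Qed.
Lemma closed_iden (A : Ob X) : isDseq (iden A).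
Proof.
  apply (proj2 (isDseq_L0 _)). intro n. rewrite Dout_iden. unfold L.
  apply L0_ract; [apply additive_ioutn | apply L0_iden].
Qed.
Lemma closed_L {A B : Ob X} (h : Hom A B) : additive h -> isDseq (L h).
Proof. intros Hh. unfold L. apply closed_ract; [exact Hh | apply closed_iden]. Qed.
Lemma closed_term {A : Ob X} (F : dseq A term) : isDseq F.
Proof. intro n. apply L0_term. Qed.
Lemma Tseq_spair {A B : Ob X} (F : dseq A B) : Tseq F = spair (lact (p0 A A) F) (Dseq F).
Proof. reflexivity. Qed.
Lemma closed_Tseq {A B : Ob X} (F : dseq A B) : isDseq F -> isDseq (Tseq F).
Proof.
  intros HF. rewrite Tseq_spair. apply closed_spair.
  - apply closed_lact; [apply additive_p0 | exact HF].
  - apply closed_Dseq; exact HF.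
Qed.
Lemma closed_Tout n : forall {A B : Ob X} (F : dseq A B), isDseq F -> isDseq (Tout n F).
Proof. induction n; intros; simpl; auto. apply closed_Tseq. apply IHn. exact H. Qed.
Lemma closed_dcomp {A B C : Ob X} (F : dseq A B) (G : dseq B C) : isDseq F -> isDseq G -> isDseq (dcomp F G).
Proof.
  intros HF HG. apply (proj2 (isDseq_L0 _)). intro n. rewrite Dout_dcomp.
  apply L0_dcomp; [exact (closed_Tout n F HF 0) | exact (HG n)].
Qed.

Lemma DX_CLAC : is_CLAC (DX X) (fun A B f => @isDseq X A B f).
Proof.
  split; intros; simpl in *.
  - apply closed_iden.
  - apply closed_dcomp; assumption.
  - apply (closed_sadd f g); assumption.
  - exact (closed_szero A B).
  - exact (closed_L (p0 A B) additive_p0).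
  - exact (closed_L (p1 A B) additive_p1).
  - apply (closed_spair f g); assumption.
  - apply closed_term.
  - apply dcomp_idl.
  - apply dcomp_idr.
  - apply dcomp_assoc.
  - apply functional_extensionality_dep; intro; apply addA.
  - apply functional_extensionality_dep; intro; apply addC.
  - apply functional_extensionality_dep; intro; apply add0.
  - exact (dcomp_sadd f g h).
  - exact (dcomp_szero f).
  - change (dcomp (spair f g) (L (p0 B D)) = f). rewrite dcomp_L.
    apply functional_extensionality_dep; intro n. unfold Defs.ract, spair. apply pp0.
  - change (dcomp (spair f g) (L (p1 B D)) = g). rewrite dcomp_L.
    apply functional_extensionality_dep; intro n. unfold Defs.ract, spair. apply pp1.
  - apply functional_extensionality_dep; intro n.
    change (pair (dcomp h (L (p0 B D)) n) (dcomp h (L (p1 B D)) n) = h n).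
    rewrite !dcomp_L. unfold Defs.ract. apply peta.
  - apply functional_extensionality_dep; intro n. apply termu.
  - change (dcomp (sadd f g) (L (p0 B D)) = sadd (dcomp f (L (p0 B D))) (dcomp g (L (p0 B D)))).
    rewrite !dcomp_L. apply ract_sadd, additive_p0.
  - change (dcomp (szero A (prd B D)) (L (p0 B D)) = szero A B).
    rewrite dcomp_L. apply ract_szero, additive_p0.
  - change (dcomp (sadd f g) (L (p1 B D)) = sadd (dcomp f (L (p1 B D))) (dcomp g (L (p1 B D)))).
    rewrite !dcomp_L. apply ract_sadd, additive_p1.
  - change (dcomp (szero A (prd B D)) (L (p1 B D)) = szero A D).
    rewrite dcomp_L. apply ract_szero, additive_p1.
Qed.

Lemma DX_prodmap {A A' B B' : Ob X} (a : Hom A B) (b : Hom A' B') :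
  @prodmap (DX X) A A' B B' (L a) (L b) = L (prodmap a b).
Proof.
  unfold prodmap at 1. simpl.
  change (spair (dcomp (L (p0 A A')) (L a)) (dcomp (L (p1 A A')) (L b)) = L (prodmap a b)).
  rewrite !L_dcomp, !lact_L, L_pair. reflexivity.
Qed.
Lemma DX_idm (A : Ob X) : @idm (DX X) A = L (idm A).
Proof. simpl. symmetry; apply L_id. Qed.
Lemma DX_add {A B : Ob X} (a b : Hom A B) : @add (DX X) A B (L a) (L b) = L (add a b).
Proof. exact (L_add a b). Qed.
Lemma DX_zero (A B : Ob X) : @zero (DX X) A B = L (zero A B).
Proof. symmetry; apply L_zero. Qed.
Lemma DX_pair {A B D : Ob X} (a : Hom A B) (b : Hom A D) : @pair (DX X) A B D (L a) (L b) = L (pair a b).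
Proof. exact (L_pair a b). Qed.
Lemma DX_p0 (A B : Ob X) : @p0 (DX X) A B = L (p0 A B).
Proof. reflexivity. Qed.
Lemma DX_p1 (A B : Ob X) : @p1 (DX X) A B = L (p1 A B).
Proof. reflexivity. Qed.
Lemma DX_comp {A B D : Ob X} (a : Hom A B) (b : Hom B D) : @comp (DX X) A B D (L a) (L b) = L (comp a b).
Proof. simpl. rewrite L_dcomp, lact_L. reflexivity. Qed.

Lemma DX_one_x_sum (A : Ob X) : @one_x_sum (DX X) A = L (one_x_sum A).
Proof. unfold one_x_sum. rewrite DX_idm, DX_p0, DX_p1, DX_add, DX_prodmap. reflexivity. Qed.
Lemma DX_one_x_p0 (A : Ob X) : @one_x_p0 (DX X) A = L (one_x_p0 A).
Proof. unfold one_x_p0. rewrite DX_idm, DX_p0, DX_prodmap. reflexivity. Qed.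
Lemma DX_one_x_p1 (A : Ob X) : @one_x_p1 (DX X) A = L (one_x_p1 A).
Proof. unfold one_x_p1. rewrite DX_idm, DX_p1, DX_prodmap. reflexivity. Qed.
Lemma DX_pair10 (A : Ob X) : @pair10 (DX X) A = L (pair10 A).
Proof. unfold pair10. rewrite DX_idm, DX_zero, DX_pair. reflexivity. Qed.
Lemma DX_ell (A : Ob X) : @ell (DX X) A = L (ell A).
Proof. unfold ell. rewrite !DX_idm, !DX_zero, !DX_pair, DX_prodmap. reflexivity. Qed.
Lemma DX_cswap (A : Ob X) : @cswap (DX X) A = L (cswap A).
Proof. unfold cswap. rewrite !DX_p0, !DX_p1, !DX_comp, !DX_pair. reflexivity. Qed.

Lemma DX_CDC : is_CDC (DX X) (fun A B f => @isDseq X A B f) (fun A B f => @Dseq X A B f).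
Proof.
  split.
  - exact DX_CLAC.
  - intros A B f Hf. simpl in *. apply closed_Dseq; exact Hf.
  - intros; reflexivity.
  - intros; reflexivity.
  - intros A B f Hf. rewrite DX_one_x_sum, DX_one_x_p0, DX_one_x_p1. simpl.
    change (dcomp (L (@one_x_sum X A)) (Dseq f)
      = sadd (dcomp (L (@one_x_p0 X A)) (Dseq f)) (dcomp (L (@one_x_p1 X A)) (Dseq f))).
    rewrite !L_dcomp. exact (proj1 (proj2 (Hf 0))).
  - intros A B f Hf. rewrite DX_pair10. simpl.
    change (dcomp (L (@pair10 X A)) (Dseq f) = szero A B). rewrite L_dcomp. exact (proj1 (Hf 0)).
  - intros; reflexivity.
  - intros A B. simpl.
    change (ract (ract (iden (P (prd A B))) (@p1 X (prd A B) (prd A B))) (@p0 X A B)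
      = dcomp (L (@p1 X (prd A B) (prd A B))) (L (@p0 X A B))).
    rewrite L_dcomp, lact_L, ract_ract. reflexivity.
  - intros A B. simpl.
    change (ract (ract (iden (P (prd A B))) (@p1 X (prd A B) (prd A B))) (@p1 X A B)
      = dcomp (L (@p1 X (prd A B) (prd A B))) (L (@p1 X A B))).
    rewrite L_dcomp, lact_L, ract_ract. reflexivity.
  - intros; reflexivity.
  - intros A B D f g Hf Hg. simpl.
    change (Dseq (dcomp f g) = dcomp (spair (dcomp (L (@p0 X A A)) f) (Dseq f)) (Dseq g)).
    rewrite L_dcomp. reflexivity.
  - intros A B f Hf. rewrite DX_ell. simpl.
    change (dcomp (L (@ell X A)) (Dseq (Dseq f)) = Dseq f). rewrite L_dcomp.
    exact (proj1 (proj2 (proj2 (Hf 0)))).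
  - intros A B f Hf. rewrite DX_cswap. simpl.
    change (dcomp (L (@cswap X A)) (Dseq (Dseq f)) = Dseq (Dseq f)). rewrite L_dcomp.
    exact (proj2 (proj2 (proj2 (Hf 0)))).
Qed.

Lemma DX_tangent {A B : Ob X} (f : dseq A B) :
  @tangent_of (DX X) (fun A B f => @Dseq X A B f) A B f = Tseq f.
Proof.
  unfold tangent_of. simpl.
  change (spair (dcomp (L (@p0 X A A)) f) (Dseq f) = Tseq f). rewrite L_dcomp. reflexivity.
Qed.

End Main.

Theorem corollary4p22 (X : CLAC) :
  is_CDC (DX X) (fun A B f => @isDseq X A B f) (fun A B f => @Dseq X A B f)
  /\ (forall (A B : Ob X) (f : dseq X A B), isDseq f ->
        delta X f 1 = Dseq f)
  /\ (forall (A B : Ob X) (f : dseq X A B), isDseq f ->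
        @tangent_of (DX X) (fun A B f => @Dseq X A B f) A B f = Tseq X f).
Proof.
  split; [exact (DX_CDC X) | split].
  - intros; reflexivity.
  - intros A B f _. exact (DX_tangent X f).
Qed.
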